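(* Let $I\subset\mathbb{R}$ be an open interval, $n\in\mathbb{N}$, $x\in C^{n+1}(I)$, $\kappa,\mu\in\,]-1,+\infty[$, $t_0\in I$ and $T>0$. Set $C_{\beta T}^{\mu,\kappa}=\beta T\,\frac{\kappa+n+1}{\mu+\kappa+2n+2}$ for $\beta\in\{-1,1\}$, and $$I_{n+1}^+=\inf_{t_0<\theta<t_0+T}x^{(n+1)}(\theta),\quad S_{n+1}^+=\sup_{t_0<\theta<t_0+T}x^{(n+1)}(\theta),$$ $$I_{n+1}^-=\inf_{t_0-T<\theta<t_0}x^{(n+1)}(\theta),\quad S_{n+1}^-=\sup_{t_0-T<\theta<t_0}x^{(n+1)}(\theta).$$ If $t_0+T\in I$, then $C_T^{\mu,\kappa}I_{n+1}^+\le e_{R_n,T}^{\mu,\kappa}(t_0)\le C_T^{\mu,\kappa}S_{n+1}^+$; if $t_0-T\in I$, then $C_{-T}^{\mu,\kappa}S_{n+1}^-\le e_{R_n,-T}^{\mu,\kappa}(t_0)\le C_{-T}^{\mu,\kappa}I_{n+1}^-$.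
   Context: For $a,b>-1$ let $w^{a,b}(t)=t^{b}(1-t)^{a}$ on $(0,1)$ and $P_k^{a,b}(t)=\sum_{s=0}^{k}\binom{k+a}{s}\binom{k+b}{k-s}(t-1)^{k-s}t^{s}$ (Jacobi polynomial on $[0,1]$); $B(\cdot,\cdot)$ is the Beta function. For $\beta\in\{-1,1\}$ with $t_0+\beta T\in I$, the minimal Jacobi estimator of $x^{(n)}(t_0)$ applied to the noise-free signal $x$ is $$\hat D_{\beta T}^{\mu,\kappa}x^{(n)}(t_0)=\frac{n!}{(\beta T)^{n}B(\kappa+n+1,\mu+n+1)}\int_0^1 w^{\mu,\kappa}(\tau)P_n^{\mu,\kappa}(\tau)\,x(t_0+\beta T\tau)\,d\tau,$$ and its bias term error is $e_{R_n,\beta T}^{\mu,\kappa}(t_0)=\hat D_{\beta T}^{\mu,\kappa}x^{(n)}(t_0)-x^{(n)}(t_0)$. *)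

(* Defs.v *)
From Stdlib Require Import Reals Arith.
From Coquelicot Require Import Coquelicot.
Open Scope R_scope.

Definition in_open_interval (a b : Rbar) (t : R) : Prop :=
  Rbar_lt a t /\ Rbar_lt t b.

Definition Cn_on (m : nat) (a b : Rbar) (x : R -> R) : Prop :=
  (forall k, (k <= m)%nat -> forall t, in_open_interval a b t -> ex_derive_n x k t)
  /\ (forall t, in_open_interval a b t -> continuous (Derive_n x m) t).

Fixpoint gbinom (r : R) (s : nat) : R :=
  match s with
  | O => 1
  | S s' => gbinom r s' * (r - INR s') / INR (S s')
  end.

Definition jac_weight (a b t : R) : R := Rpower t b * Rpower (1 - t) a.

Definition jacobiP (k : nat) (a b t : R) : R :=
  sum_f_R0 (fun s => gbinom (INR k + a) s * gbinom (INR k + b) (k - s)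
                     * (t - 1) ^ (k - s) * t ^ s) k.

Definition Beta (p q : R) : R :=
  RInt_gen (fun t => Rpower t (p - 1) * Rpower (1 - t) (q - 1))
           (at_right 0) (at_left 1).

(* minimal Jacobi estimator of x^(n)(t0), with h = beta*T *)
Definition jacobi_estimator (n : nat) (mu kappa h t0 : R) (x : R -> R) : R :=
  INR (Factorial.fact n) / (h ^ n * Beta (kappa + INR n + 1) (mu + INR n + 1))
  * RInt_gen (fun tau => jac_weight mu kappa tau * jacobiP n mu kappa tau
                         * x (t0 + h * tau))
             (at_right 0) (at_left 1).

Definition bias_error (n : nat) (mu kappa h t0 : R) (x : R -> R) : R :=
  jacobi_estimator n mu kappa h t0 x - Derive_n x n t0.

Definition Ccoef (n : nat) (mu kappa h : R) : R :=
  h * (kappa + INR n + 1) / (mu + kappa + 2 * INR n + 2).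

Definition inf_on (f : R -> R) (l r : R) : Rbar :=
  Glb_Rbar (fun y => exists th, l < th < r /\ y = f th).
Definition sup_on (f : R -> R) (l r : R) : Rbar :=
  Lub_Rbar (fun y => exists th, l < th < r /\ y = f th).

(* Main.v *)
Require Import Defs.
From Stdlib Require Import Reals Lra Lia Psatz.
From Coquelicot Require Import Coquelicot.
Open Scope R_scope.

Lemma Rpow_pos x y : 0 < Rpower x y.
Proof. unfold Rpower; apply exp_pos. Qed.

Lemma exp_le' a b : a <= b -> exp a <= exp b.
Proof. intros H; destruct (Rle_lt_or_eq_dec _ _ H) as [h|h]; [left; apply exp_increasing; auto|subst; lra]. Qed.

Lemma Rpow_le_base x y p : 0 < x <= y -> 0 <= p -> Rpower x p <= Rpower y p.
Proof.
  intros [Hx Hxy] Hp; unfold Rpower.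
  destruct (Rle_lt_or_eq_dec _ _ Hxy) as [H|H]; [|subst; lra].
  apply Rlt_le in H.
  destruct (Rle_lt_or_eq_dec _ _ Hp) as [Hp'|Hp']; [|subst; rewrite !Rmult_0_l; lra].
  apply exp_le'. apply Rmult_le_compat_l; [lra|]. apply ln_le; lra.
Qed.

Lemma Rpow_le_base_neg x y p : 0 < x <= y -> p <= 0 -> Rpower y p <= Rpower x p.
Proof.
  intros [Hx Hxy] Hp; unfold Rpower.
  apply exp_le'. assert (ln x <= ln y) by (apply ln_le; lra). nra.
Qed.

Lemma Rpow_lt_base x y p : 0 < x < y -> 0 < p -> Rpower x p < Rpower y p.
Proof.
  intros [Hx Hxy] Hp; unfold Rpower.
  apply exp_increasing. assert (ln x < ln y) by (apply ln_increasing; lra). nra.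
Qed.

Lemma lim_Rpow0 p : 0 < p -> filterlim (fun t => Rpower t p) (at_right 0) (locally 0).
Proof.
  intros Hp. apply filterlim_locally. intros eps.
  set (d := Rpower eps (/p)).
  assert (Hd : 0 < d) by apply Rpow_pos.
  exists (mkposreal d Hd). intros t Ht Ht0.
  unfold ball in Ht; simpl in Ht; unfold AbsRing_ball, abs, minus, plus, opp in Ht; simpl in Ht.
  unfold ball; simpl; unfold AbsRing_ball, abs, minus, plus, opp; simpl.
  rewrite Ropp_0, Rplus_0_r in *.
  rewrite Rabs_pos_eq in Ht by lra.
  rewrite Rabs_pos_eq by (left; apply Rpow_pos).
  replace (pos eps) with (Rpower d p).
  - apply Rpow_lt_base; lra.
  - unfold d; rewrite Rpower_mult. rewrite Rinv_l by lra. apply Rpower_1. apply cond_pos.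
Qed.

Lemma der_Rpow t p : 0 < t -> is_derive (fun s => Rpower s p) t (p * Rpower t (p - 1)).
Proof. intros Ht. apply is_derive_Reals. apply derivable_pt_lim_power; auto. Qed.

Lemma der_Rpow1m t p : t < 1 ->
  is_derive (fun s => Rpower (1 - s) p) t (- (p * Rpower (1 - t) (p - 1))).
Proof.
  intros Ht.
  replace (- (p * Rpower (1 - t) (p - 1))) with (scal (-1) (p * Rpower (1 - t) (p - 1))).
  2:{ unfold scal; simpl; unfold mult; simpl; ring. }
  apply (is_derive_comp (fun s => Rpower s p) (fun s => 1 - s)).
  - apply der_Rpow; lra.
  - auto_derive; [auto|ring].
Qed.

Lemma cont_Rpow t p : 0 < t -> continuous (fun s => Rpower s p) t.
Proof. intros; apply (ex_derive_continuous (fun s => Rpower s p)); exists (p * Rpower t (p - 1)); apply der_Rpow; auto. Qed.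

Lemma cont_Rpow1m t p : t < 1 -> continuous (fun s => Rpower (1 - s) p) t.
Proof. intros; apply (ex_derive_continuous (fun s => Rpower (1 - s) p)); exists (- (p * Rpower (1 - t) (p - 1))); apply der_Rpow1m; auto. Qed.

Lemma der_eq (f : R -> R) t l l' : is_derive f t l -> l = l' -> is_derive f t l'.
Proof. intros H ->; exact H. Qed.

Lemma der_mult (f g : R -> R) t df dg : is_derive f t df -> is_derive g t dg ->
  is_derive (fun s => f s * g s) t (df * g t + f t * dg).
Proof. intros H1 H2. apply (is_derive_mult f g t df dg H1 H2). intros; apply Rmult_comm. Qed.

Lemma der_plus (f g : R -> R) t df dg : is_derive f t df -> is_derive g t dg ->
  is_derive (fun s => f s + g s) t (df + dg).
Proof. intros H1 H2. apply (is_derive_plus f g t df dg H1 H2). Qed.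

Lemma der_minus (f g : R -> R) t df dg : is_derive f t df -> is_derive g t dg ->
  is_derive (fun s => f s - g s) t (df - dg).
Proof. intros H1 H2. apply (is_derive_minus f g t df dg H1 H2). Qed.

Lemma der_const c t : is_derive (fun _ => c) t 0.
Proof. apply (is_derive_const c). Qed.

Lemma der_sum (f : nat -> R -> R) (d : nat -> R) n t :
  (forall k, (k <= n)%nat -> is_derive (f k) t (d k)) ->
  is_derive (fun y => sum_f_R0 (fun k => f k y) n) t (sum_f_R0 d n).
Proof.
  induction n; intros H; simpl.
  - apply H; lia.
  - apply der_plus; [apply IHn; intros; apply H; lia| apply H; lia].
Qed.

Ltac fixeq := match goal with |- ?a = ?b => change (@eq R a b) end.

Lemma cmult (f g : R -> R) t : continuous f t -> continuous g t -> continuous (fun s => f s * g s) t.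
Proof. intros H1 H2. apply (continuous_mult f g t H1 H2). Qed.

Lemma cplus (f g : R -> R) t : continuous f t -> continuous g t -> continuous (fun s => f s + g s) t.
Proof. intros H1 H2. apply (continuous_plus f g t H1 H2). Qed.

Lemma cminus (f g : R -> R) t : continuous f t -> continuous g t -> continuous (fun s => f s - g s) t.
Proof. intros H1 H2. apply (continuous_minus f g t H1 H2). Qed.

Lemma cconst (c t : R) : continuous (fun _ : R => c) t.
Proof. apply (continuous_const (U:=R_UniformSpace) (V:=R_UniformSpace) c t). Qed.

Lemma cid (t : R) : continuous (fun s : R => s) t.
Proof. apply (continuous_id (U:=R_UniformSpace) t). Qed.

Lemma ccomp (f g : R -> R) t : continuous f t -> continuous g (f t) -> continuous (fun s => g (f s)) t.
Proof. intros H1 H2. apply (continuous_comp f g t H1 H2). Qed.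

Lemma cext (f g : R -> R) t : (forall s, f s = g s) -> continuous f t -> continuous g t.
Proof. intros H. apply continuous_ext; auto. Qed.

Lemma Rpower_1_base p : Rpower 1 p = 1.
Proof. unfold Rpower. rewrite ln_1, Rmult_0_r. apply exp_0. Qed.

Lemma lim_mult {F : (R -> Prop) -> Prop} {FF : Filter F} (f g : R -> R) a b :
  filterlim f F (locally a) -> filterlim g F (locally b) ->
  filterlim (fun t => f t * g t) F (locally (a * b)).
Proof.
  intros H1 H2. apply (filterlim_comp_2 f g Rmult H1 H2).
  apply (filterlim_mult (K:=R_AbsRing) a b).
Qed.

Lemma lim_plus {F : (R -> Prop) -> Prop} {FF : Filter F} (f g : R -> R) a b :
  filterlim f F (locally a) -> filterlim g F (locally b) ->
  filterlim (fun t => f t + g t) F (locally (a + b)).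
Proof.
  intros H1 H2. apply (filterlim_comp_2 f g Rplus H1 H2).
  apply (filterlim_plus (K:=R_AbsRing) (V:=R_NormedModule) a b).
Qed.

Lemma lim_const {F : (R -> Prop) -> Prop} {FF : Filter F} (c : R) :
  filterlim (fun _ => c) F (locally c).
Proof. apply filterlim_const. Qed.

Lemma lim_eq {F : (R -> Prop) -> Prop} (f : R -> R) a b :
  filterlim f F (locally a) -> a = b -> filterlim f F (locally b).
Proof. intros H ->; exact H. Qed.

Lemma lim_sum0 {F : (R -> Prop) -> Prop} {FF : Filter F} (g : nat -> R -> R) N :
  (forall i, (i <= N)%nat -> filterlim (g i) F (locally 0)) ->
  filterlim (fun t => sum_f_R0 (fun i => g i t) N) F (locally 0).
Proof.
  induction N; intros H; simpl.
  - apply H; lia.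
  - eapply lim_eq. apply lim_plus. apply IHN; intros; apply H; lia. apply H; lia. fixeq; ring.
Qed.

Lemma cont_right (f : R -> R) x : continuous f x -> filterlim f (at_right x) (locally (f x)).
Proof. intros H. eapply filterlim_filter_le_1; [|exact H]. apply filter_le_within. Qed.

Lemma cont_left (f : R -> R) x : continuous f x -> filterlim f (at_left x) (locally (f x)).
Proof. intros H. eapply filterlim_filter_le_1; [|exact H]. apply filter_le_within. Qed.

Lemma ball_R (x : R) (e : R) (y : R) : @ball R_UniformSpace x e y <-> Rabs (y - x) < e.
Proof. unfold ball; simpl; unfold AbsRing_ball, abs, minus, plus, opp; simpl. tauto. Qed.

Lemma ev_right0 c : 0 < c -> at_right 0 (fun a => 0 < a < c).
Proof.
  intros Hc. exists (mkposreal c Hc). intros y Hy Hy0. apply (proj1 (ball_R _ _ _)) in Hy; cbn [pos] in Hy.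
  rewrite Rabs_pos_eq in Hy; lra.
Qed.

Lemma ev_left1 c : 0 < c -> at_left 1 (fun b => 1 - c < b < 1).
Proof.
  intros Hc. exists (mkposreal c Hc). intros y Hy Hy0. apply (proj1 (ball_R _ _ _)) in Hy; cbn [pos] in Hy.
  rewrite Rabs_left in Hy; lra.
Qed.

Lemma ev_lim {F : (R -> Prop) -> Prop} {FF : Filter F} (g : R -> R) l e :
  filterlim g F (locally l) -> 0 < e -> F (fun a => Rabs (g a - l) < e).
Proof.
  intros Hg He. pose proof (proj1 (filterlim_locally g l) Hg (mkposreal e He)) as Hg'.
  revert Hg'. apply filter_imp. intros x Hx. apply (proj1 (ball_R _ _ _)) in Hx. exact Hx.
Qed.

Lemma rint_der (F f : R -> R) u v : u <= v ->
  (forall t, u <= t <= v -> is_derive F t (f t)) ->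
  (forall t, u <= t <= v -> continuous f t) -> RInt f u v = F v - F u.
Proof.
  intros Huv Hd Hc. apply is_RInt_unique.
  apply (is_RInt_derive F f u v).
  - intros t Ht; rewrite Rmin_left, Rmax_right in Ht by lra; auto.
  - intros t Ht; rewrite Rmin_left, Rmax_right in Ht by lra; auto.
Qed.

Lemma cont_of_der (F : R -> R) t l : is_derive F t l -> continuous F t.
Proof. intros H. apply (ex_derive_continuous F). exists l; exact H. Qed.

Lemma exR (f : R -> R) u v : (forall t, Rmin u v <= t <= Rmax u v -> continuous f t) -> ex_RInt f u v.
Proof. intros H; apply (ex_RInt_continuous f); auto. Qed.

Lemma bnd_left (f : R -> R) g M :
  -1 < g -> (forall t, 0 < t <= 1/2 -> continuous f t) ->
  (forall t, 0 < t <= 1/2 -> Rabs (f t) <= M * Rpower t g) ->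
  forall a a', 0 < a <= 1/2 -> 0 < a' <= 1/2 ->
  Rabs (RInt f a a') <= M * Rmax (Rpower a (g+1)) (Rpower a' (g+1)) / (g+1).
Proof.
  intros Hg Hc Hb.
  assert (HM : 0 <= M).
  { specialize (Hb (1/2) ltac:(lra)). pose proof (Rpow_pos (1/2) g).
    pose proof (Rabs_pos (f (1/2))). nra. }
  set (H := fun t => (M / (g+1)) * Rpower t (g+1)).
  assert (Hder : forall t, 0 < t -> is_derive H t (M * Rpower t g)).
  { intros t Ht. unfold H. eapply der_eq. apply is_derive_scal. apply der_Rpow. lra.
    replace (g+1-1) with g by ring. fixeq. field. lra. }

  assert (HderN : forall t, 0 < t -> is_derive (fun s => - H s) t (- (M * Rpower t g))).
  { intros t Ht. eapply der_eq. apply (is_derive_opp H). apply Hder; auto. fixeq; reflexivity. }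
  assert (Cs : forall t, 0 < t -> continuous (fun s => M * Rpower s g) t).
  { intros t Ht. apply (cont_of_der _ t (M * (g * Rpower t (g - 1)))). apply is_derive_scal, der_Rpow; auto. }
  assert (CsN : forall t, 0 < t -> continuous (fun s => - (M * Rpower s g)) t).
  { intros t Ht. apply (cont_of_der _ t (- (M * (g * Rpower t (g - 1))))).
    apply (is_derive_opp (fun s => M * Rpower s g)). apply is_derive_scal, der_Rpow; auto. }
  assert (key : forall u v, 0 < u <= v -> v <= 1/2 ->
     Rabs (RInt f u v) <= M * Rpower v (g+1) / (g+1)).
  { intros u v Huv Hv.
    assert (Ef : ex_RInt f u v).
    { apply exR; intros t Ht; rewrite Rmin_left, Rmax_right in Ht by lra; apply Hc; lra. }
    assert (E1 : RInt (fun t => M * Rpower t g) u v = H v - H u).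
    { apply (rint_der H); [lra| |]; intros t Ht. apply Hder; lra. apply Cs; lra. }
    assert (E2 : RInt (fun t => - (M * Rpower t g)) u v = - H v - - H u).
    { apply (rint_der (fun s => - H s)); [lra| |]; intros t Ht. apply HderN; lra. apply CsN; lra. }
    assert (L1 : RInt f u v <= RInt (fun t => M * Rpower t g) u v).
    { apply RInt_le; auto; [lra| |].
      - apply exR; intros t Ht; rewrite Rmin_left, Rmax_right in Ht by lra; apply Cs; lra.
      - intros t Ht. specialize (Hb t ltac:(lra)). apply Rabs_le_between in Hb. lra. }
    assert (L2 : RInt (fun t => - (M * Rpower t g)) u v <= RInt f u v).
    { apply RInt_le; auto; [lra| |].
      - apply exR; intros t Ht; rewrite Rmin_left, Rmax_right in Ht by lra; apply CsN; lra.
      - intros t Ht. specialize (Hb t ltac:(lra)). apply Rabs_le_between in Hb. lra. }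
    rewrite E1 in L1. rewrite E2 in L2.
    assert (0 <= H u). { unfold H. apply Rmult_le_pos. apply Rdiv_le_0_compat; lra. left; apply Rpow_pos. }
    assert (H v = M * Rpower v (g+1) / (g+1)) by (unfold H; field; lra).
    apply Rabs_le_between. split; lra. }
  intros a a' Ha Ha'.
  assert (Hq : 0 <= M / (g+1)) by (apply Rdiv_le_0_compat; lra).
  destruct (Rle_dec a a') as [h|h].
  - eapply Rle_trans. apply key; lra.
    unfold Rdiv. rewrite !(Rmult_comm M), !Rmult_assoc. apply Rmult_le_compat_r.
    apply Rmult_le_pos; auto; left; apply Rinv_0_lt_compat; lra. apply Rmax_r.
  - rewrite <- (opp_RInt_swap f).
    2:{ apply exR; intros t Ht. rewrite Rmin_left, Rmax_right in Ht by lra. apply Hc. lra. }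
    change (opp (RInt f a' a)) with (- RInt f a' a). rewrite Rabs_Ropp.
    eapply Rle_trans. apply key; lra.
    unfold Rdiv. rewrite !(Rmult_comm M), !Rmult_assoc. apply Rmult_le_compat_r.
    apply Rmult_le_pos; auto; left; apply Rinv_0_lt_compat; lra. apply Rmax_l.
Qed.

Lemma pw_bound b t : 0 < t <= 1/2 -> Rpower (1 - t) b <= Rmax 1 (Rpower (1/2) b).
Proof.
  intros Ht. destruct (Rle_dec 0 b) as [h|h].
  - eapply Rle_trans; [apply (Rpow_le_base (1-t) 1 b); lra|]. rewrite Rpower_1_base. apply Rmax_l.
  - eapply Rle_trans; [apply (Rpow_le_base_neg (1/2) (1-t) b); lra|]. apply Rmax_r.
Qed.

Lemma right_to_left (P : R -> Prop) : at_right 0 P -> at_left 1 (fun b => P (1 - b)).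
Proof.
  intros [e He]. exists e. intros y Hy Hy1. apply He.
  - apply (proj2 (ball_R _ _ _)). apply (proj1 (ball_R _ _ _)) in Hy.
    replace (1 - y - 0) with (- (y - 1)) by ring. rewrite Rabs_Ropp. exact Hy.
  - lra.
Qed.

Lemma lim_Rpow1 p : 0 < p -> filterlim (fun t => Rpower (1 - t) p) (at_left 1) (locally 0).
Proof.
  intros Hp P HP. apply (right_to_left (fun s => P (Rpower s p))). apply lim_Rpow0; auto.
Qed.

Lemma ex_int_w al be K (G : R -> R) :
  -1 < al -> -1 < be -> (forall t, 0 < t < 1 -> continuous G t) ->
  (forall t, 0 < t < 1 -> Rabs (G t) <= K) ->
  ex_RInt_gen (fun t => Rpower t al * Rpower (1 - t) be * G t) (at_right 0) (at_left 1).
Proof.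
  intros Ha Hb Hc HK.
  set (f := fun t => Rpower t al * Rpower (1 - t) be * G t).
  assert (HK0 : 0 <= K) by (specialize (HK (1/2) ltac:(lra)); pose proof (Rabs_pos (G (1/2))); lra).
  assert (Cf : forall t, 0 < t < 1 -> continuous f t).
  { intros t Ht. unfold f. apply cmult; [apply cmult|]. apply cont_Rpow; lra. apply cont_Rpow1m; lra. apply Hc; auto. }
  assert (Ef : forall u v, 0 < u < 1 -> 0 < v < 1 -> ex_RInt f u v).
  { intros u v Hu Hv. apply exR. intros t Ht. apply Cf. split.
    - apply Rlt_le_trans with (Rmin u v); [apply Rmin_glb_lt; lra|apply Ht].
    - apply Rle_lt_trans with (Rmax u v); [apply Ht|apply Rmax_lub_lt; lra]. }
  set (cb := Rmax 1 (Rpower (1/2) be)).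
  set (ca := Rmax 1 (Rpower (1/2) al)).
  assert (Hcb : 0 <= cb) by (unfold cb; eapply Rle_trans; [|apply Rmax_l]; lra).
  assert (Hca : 0 <= ca) by (unfold ca; eapply Rle_trans; [|apply Rmax_l]; lra).
  assert (BL : forall a a', 0 < a <= 1/2 -> 0 < a' <= 1/2 ->
     Rabs (RInt f a a') <= (K * cb) * Rmax (Rpower a (al+1)) (Rpower a' (al+1)) / (al+1)).
  { apply bnd_left; auto.
    - intros t Ht; apply Cf; lra.
    - intros t Ht. unfold f. rewrite !Rabs_mult, (Rabs_pos_eq (Rpower t al)), (Rabs_pos_eq (Rpower (1-t) be))
        by (left; apply Rpow_pos).
      pose proof (pw_bound be t Ht). pose proof (HK t ltac:(lra)). pose proof (Rpow_pos t al).
      pose proof (Rpow_pos (1-t) be). pose proof (Rabs_pos (G t)). fold cb in H.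
      replace (K * cb * Rpower t al) with (Rpower t al * (cb * K)) by ring.
      rewrite Rmult_assoc. apply Rmult_le_compat_l; [lra|].
      apply Rmult_le_compat; lra. }
  set (f2 := fun y => scal (-1) (f (-1 * y + 1))).
  assert (BR : forall b b', 1/2 <= b < 1 -> 1/2 <= b' < 1 ->
     Rabs (RInt f b' b) <= (K * ca) * Rmax (Rpower (1-b') (be+1)) (Rpower (1-b) (be+1)) / (be+1)).
  { intros b b' Hb1 Hb2.
    replace (RInt f b' b) with (RInt f2 (1-b') (1-b)).
    2:{ unfold f2. pose proof (RInt_comp_lin (V:=R_CompleteNormedModule) f (-1) 1 (1-b') (1-b)) as EE. replace (-1 * (1 - b') + 1) with b' in EE by ring. replace (-1 * (1 - b) + 1) with b in EE by ring. apply EE, Ef; lra. }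
    apply bnd_left; auto; try lra.
    - intros t Ht. unfold f2. apply (continuous_scal (fun _ => -1) (fun y => f (-1 * y + 1))).
      apply cconst. apply ccomp. apply (cont_of_der _ t (-1)). auto_derive; auto; ring.
      apply Cf; lra.
    - intros t Ht. unfold f2, f. unfold scal; simpl; unfold mult; simpl.
      replace (1 - (-1 * t + 1)) with t by ring. replace (-1 * t + 1) with (1 - t) by ring.
      rewrite !Rabs_mult, Rabs_m1, (Rabs_pos_eq (Rpower t be)), (Rabs_pos_eq (Rpower (1-t) al))
        by (left; apply Rpow_pos).
      pose proof (pw_bound al t Ht). pose proof (HK (1-t) ltac:(lra)). pose proof (Rpow_pos t be).
      pose proof (Rpow_pos (1-t) al). pose proof (Rabs_pos (G (1-t))). fold ca in H.
      replace (K * ca * Rpower t be) with (Rpower t be * (ca * K)) by ring.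
      rewrite Rmult_1_l, (Rmult_comm (Rpower (1-t) al)), Rmult_assoc. apply Rmult_le_compat_l; [lra|].
      apply Rmult_le_compat; lra. }
  assert (PF : ProperFilter (filter_prod (at_right 0) (at_left 1))).
  { apply filter_prod_proper; try apply at_right_proper_filter; try apply at_left_proper_filter. }
  set (If := fun ab : R * R => RInt f (fst ab) (snd ab)).
  destruct (proj1 (filterlim_locally_cauchy (U:=R_CompleteSpace) (F:=filter_prod (at_right 0) (at_left 1)) If)) as [y Hy].
  { intros eps.
    set (A1 := K*cb/(al+1)). set (A2 := K*ca/(be+1)).
    assert (HA1 : 0 <= A1) by (unfold A1; apply Rdiv_le_0_compat; [apply Rmult_le_pos|]; lra).
    assert (HA2 : 0 <= A2) by (unfold A2; apply Rdiv_le_0_compat; [apply Rmult_le_pos|]; lra).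
    pose proof (cond_pos eps) as Heps.
    set (e1 := eps/(2*(A1+1))). set (e2 := eps/(2*(A2+1))).
    assert (He1 : 0 < e1) by (unfold e1; apply Rdiv_lt_0_compat; lra).
    assert (He2 : 0 < e2) by (unfold e2; apply Rdiv_lt_0_compat; lra).
    exists (fun ab => (0 < fst ab < 1/2 /\ Rabs (Rpower (fst ab) (al+1) - 0) < e1) /\
                      (1/2 < snd ab < 1 /\ Rabs (Rpower (1 - snd ab) (be+1) - 0) < e2)).
    split.
    - exists (fun a => 0 < a < 1/2 /\ Rabs (Rpower a (al+1) - 0) < e1)
             (fun b => 1/2 < b < 1 /\ Rabs (Rpower (1 - b) (be+1) - 0) < e2).
      + apply filter_and. apply ev_right0; lra. apply ev_lim; [apply lim_Rpow0; lra|auto].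
      + apply filter_and.
        * eapply filter_imp; [|apply (ev_left1 (1/2)); lra]. intros b Hb'; lra.
        * apply ev_lim; [apply lim_Rpow1; lra|auto].
      + intros; simpl; tauto.
    - intros [a b] [a' b'] [[Ja Ja1] [Jb Jb1]] [[Ja' Ja1'] [Jb' Jb1']]; simpl in *.
      apply (proj2 (ball_R _ _ _)). unfold If; simpl.
      assert (C1 : RInt f a a' + RInt f a' b = RInt f a b).
      { apply (RInt_Chasles f a a' b); apply Ef; lra. }
      assert (C2 : RInt f a' b' + RInt f b' b = RInt f a' b).
      { apply (RInt_Chasles f a' b' b); apply Ef; lra. }
      rewrite Rminus_0_r, Rabs_pos_eq in Ja1, Ja1', Jb1, Jb1' by (left; apply Rpow_pos).
      pose proof (BL a a' ltac:(lra) ltac:(lra)) as L1.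
      pose proof (BR b b' ltac:(lra) ltac:(lra)) as L2.
      assert (M1 : Rmax (Rpower a (al + 1)) (Rpower a' (al + 1)) < e1) by (apply Rmax_lub_lt; lra).
      assert (M2 : Rmax (Rpower (1 - b') (be + 1)) (Rpower (1 - b) (be + 1)) < e2) by (apply Rmax_lub_lt; lra).
      replace (K * cb * Rmax (Rpower a (al + 1)) (Rpower a' (al + 1)) / (al + 1))
        with (A1 * Rmax (Rpower a (al + 1)) (Rpower a' (al + 1))) in L1 by (unfold A1; field; lra).
      replace (K * ca * Rmax (Rpower (1 - b') (be + 1)) (Rpower (1 - b) (be + 1)) / (be + 1))
        with (A2 * Rmax (Rpower (1 - b') (be + 1)) (Rpower (1 - b) (be + 1))) in L2 by (unfold A2; field; lra).
      assert (Q1 : A1 * Rmax (Rpower a (al + 1)) (Rpower a' (al + 1)) <= A1 * e1) by (apply Rmult_le_compat_l; lra).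
      assert (Q2 : A2 * Rmax (Rpower (1 - b') (be + 1)) (Rpower (1 - b) (be + 1)) <= A2 * e2) by (apply Rmult_le_compat_l; lra).
      assert (R1 : A1 * e1 < eps / 2) by (unfold e1; apply Rmult_lt_reg_r with (2 * (A1+1)); [lra|]; field_simplify; nra).
      assert (R2 : A2 * e2 < eps / 2) by (unfold e2; apply Rmult_lt_reg_r with (2 * (A2+1)); [lra|]; field_simplify; nra).
      replace (RInt f a' b' - RInt f a b) with (- RInt f a a' - RInt f b' b) by lra.
      eapply Rle_lt_trans; [apply Rabs_triang|]. rewrite Rabs_Ropp, Rabs_Ropp. lra. }
  exists y. unfold is_RInt_gen.
  apply (filterlimi_lim_ext_loc If); [|exact Hy].
  exists (fun a => 0 < a < 1) (fun b => 1 - 1 < b < 1).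
  - apply ev_right0; lra.
  - apply ev_left1; lra.
  - intros u v Hu Hv. unfold If; simpl. exact (RInt_correct f u v (Ef u v ltac:(lra) ltac:(lra))).
Qed.

Notation Cb := Stdlib.Reals.Binomial.C.

Fixpoint bn (j i : nat) : R :=
  match j, i with
  | O, O => 1
  | O, S _ => 0
  | S j', O => 1
  | S j', S i' => bn j' i' + bn j' (S i')
  end.

Lemma bn_gt j i : (j < i)%nat -> bn j i = 0.
Proof.
  revert i; induction j; intros i H; destruct i; try lia; simpl; auto.
  rewrite !IHj by lia. ring.
Qed.

Lemma bn_0 j : bn j 0 = 1.
Proof. destruct j; reflexivity. Qed.

Lemma C_0 n : Cb n 0 = 1.
Proof. unfold Binomial.C. rewrite Nat.sub_0_r. simpl. field. apply INR_fact_neq_0. Qed.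

Lemma C_diag n : Cb n n = 1.
Proof. unfold Binomial.C. rewrite Nat.sub_diag. simpl. field. apply INR_fact_neq_0. Qed.

Lemma bn_C j i : (i <= j)%nat -> bn j i = Cb j i.
Proof.
  revert i; induction j; intros i H.
  - destruct i; [|lia]. simpl. rewrite C_0. reflexivity.
  - destruct i. { rewrite bn_0, C_0; reflexivity. }
    simpl. destruct (Nat.eq_dec i j) as [->|Hij].
    + rewrite (bn_gt j (S j)) by lia. rewrite IHj by lia. rewrite !C_diag. ring.
    + rewrite !IHj by lia. apply pascal. lia.
Qed.

Lemma bn_fact j i : (i <= j)%nat ->
  bn j i * INR (Factorial.fact i) * INR (Factorial.fact (j - i)) = INR (Factorial.fact j).
Proof.
  intros H. rewrite bn_C by auto. unfold Binomial.C. field.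
  split; apply INR_fact_neq_0.
Qed.

Lemma sum_shift (f : nat -> R) n :
  sum_f_R0 f (S n) = f O + sum_f_R0 (fun i => f (S i)) n.
Proof.
  induction n. simpl; ring.
  rewrite tech5, IHn. simpl. ring.
Qed.

Lemma leib_alg (x y : nat -> R) j :
  sum_f_R0 (fun i => bn j i * (x (S i) * y (j - i)%nat + x i * y (S (j - i)))) j
  = sum_f_R0 (fun i => bn (S j) i * x i * y (S j - i)%nat) (S j).
Proof.
  rewrite sum_shift. simpl (bn (S j) 0). 
  transitivity (sum_f_R0 (fun i => bn j i * x (S i) * y (j - i)%nat) j
                + sum_f_R0 (fun i => bn j i * x i * y (S (j - i))) j).
  { rewrite <- sum_plus. apply sum_eq. intros; ring. }
  assert (E : sum_f_R0 (fun i => bn j i * x i * y (S (j - i))) j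
              = x O * y (S j) + sum_f_R0 (fun i => bn j (S i) * x (S i) * y (j - i)%nat) j).
  { pose proof (tech5 (fun i => bn j i * x i * y (S (j - i))) j) as T.
    cbv beta in T. rewrite (bn_gt j (S j)) in T by lia. rewrite Rmult_0_l, Rmult_0_l, Rplus_0_r in T.
    rewrite <- T, sum_shift. rewrite bn_0, Nat.sub_0_r. f_equal; [ring|].
    apply sum_eq. intros i Hi. destruct (Nat.eq_dec i j) as [->|Hij].
    - rewrite bn_gt by lia. ring.
    - replace (S (j - S i)) with (j - i)%nat by lia. reflexivity. }
  rewrite E. rewrite Nat.sub_0_r.
  replace (sum_f_R0 (fun i => bn (S j) (S i) * x (S i) * y (S j - S i)%nat) j)
    with (sum_f_R0 (fun i => bn j i * x (S i) * y (j - i)%nat) j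
          + sum_f_R0 (fun i => bn j (S i) * x (S i) * y (j - i)%nat) j).
  2:{ rewrite <- sum_plus. apply sum_eq. intros i Hi. simpl (S j - S i)%nat. simpl (bn (S j) (S i)). ring. }
  ring.
Qed.

Definition Lb (u v : nat -> R -> R) (j : nat) (t : R) : R :=
  sum_f_R0 (fun i => bn j i * u i t * v (j - i)%nat t) j.

Lemma leibniz (u v : nat -> R -> R) (D : R -> Prop) :
  (forall i t, D t -> is_derive (u i) t (u (S i) t)) ->
  (forall k t, D t -> is_derive (v k) t (v (S k) t)) ->
  forall j t, D t -> is_derive (Lb u v j) t (Lb u v (S j) t).
Proof.
  intros Hu Hv j t Ht. unfold Lb.
  eapply der_eq.
  - apply (der_sum (fun i y => bn j i * u i y * v (j - i)%nat y)
       (fun i => bn j i * (u (S i) t * v (j - i)%nat t + u i t * v (S (j - i)) t))).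
    intros k Hk.
    eapply der_eq.
    + apply (der_mult (fun y => bn j k * u k y) (v (j - k)%nat)).
      * apply is_derive_scal. apply Hu; auto.
      * apply Hv; auto.
    + fixeq. ring.
  - fixeq. apply (leib_alg (fun i => u i t) (fun i => v i t)).
Qed.

Fixpoint ffa (r : R) (k : nat) : R :=
  match k with O => 1 | S k' => ffa r k' * (r - INR k') end.
Fixpoint ffb (r : R) (k : nat) : R :=
  match k with O => 1 | S k' => ffb r k' * (- (r - INR k')) end.

Definition uu (be : R) (k : nat) (t : R) : R := ffb be k * Rpower (1 - t) (be - INR k).
Definition vv (al : R) (k : nat) (t : R) : R := ffa al k * Rpower t (al - INR k).
Definition Phi (al be : R) (j : nat) (t : R) : R := Lb (uu be) (vv al) j t.

Lemma der_uu be k t : t < 1 -> is_derive (uu be k) t (uu be (S k) t).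
Proof.
  intros Ht. unfold uu. eapply der_eq. apply is_derive_scal. apply der_Rpow1m; auto.
  simpl ffb. rewrite S_INR. replace (be - INR k - 1) with (be - (INR k + 1)) by ring. fixeq; ring.
Qed.

Lemma der_vv al k t : 0 < t -> is_derive (vv al k) t (vv al (S k) t).
Proof.
  intros Ht. unfold vv. eapply der_eq. apply is_derive_scal. apply der_Rpow; auto.
  simpl ffa. rewrite S_INR. replace (al - INR k - 1) with (al - (INR k + 1)) by ring. fixeq; ring.
Qed.

Lemma der_Phi al be j t : 0 < t < 1 -> is_derive (Phi al be j) t (Phi al be (S j) t).
Proof.
  intros Ht. unfold Phi.
  apply (leibniz (uu be) (vv al) (fun t => 0 < t < 1)); auto.
  - intros i s Hs; apply der_uu; lra.
  - intros k s Hs; apply der_vv; lra.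
Qed.

Lemma cont_Phi al be j t : 0 < t < 1 -> continuous (Phi al be j) t.
Proof. intros Ht. apply (cont_of_der _ t (Phi al be (S j) t)), der_Phi; auto. Qed.

Lemma Phi_0 al be t : Phi al be 0 t = Rpower t al * Rpower (1 - t) be.
Proof. unfold Phi, Lb, uu, vv. simpl. rewrite !Rminus_0_r. ring. Qed.

Lemma ffa_gb r k : ffa r k = INR (Factorial.fact k) * gbinom r k.
Proof.
  induction k; cbn [ffa ffb gbinom]. simpl; ring.
  rewrite IHk. rewrite fact_simpl, mult_INR. field. try rewrite <- S_INR. apply not_0_INR. lia.
Qed.

Lemma ffb_gb r k : ffb r k = (-1) ^ k * INR (Factorial.fact k) * gbinom r k.
Proof.
  induction k; cbn [ffa ffb gbinom]. simpl; ring.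
  rewrite IHk. rewrite fact_simpl, mult_INR. simpl pow. field. try rewrite <- S_INR. apply not_0_INR. lia.
Qed.

Lemma Phi_n n mu kappa t : 0 < t < 1 ->
  Phi (INR n + kappa) (INR n + mu) n t
  = (-1) ^ n * INR (Factorial.fact n) * jac_weight mu kappa t * jacobiP n mu kappa t.
Proof.
  intros Ht. unfold Phi, Lb, jacobiP, jac_weight.
  rewrite scal_sum. apply sum_eq. intros i Hi.
  unfold uu, vv. rewrite ffa_gb, ffb_gb.
  replace (INR n + mu - INR i) with (mu + INR (n - i)) by (rewrite minus_INR by lia; ring).
  replace (INR n + kappa - INR (n - i)) with (kappa + INR i) by (rewrite minus_INR by lia; ring).
  rewrite !Rpower_plus, !Rpower_pow by lra.
  assert (E1 : (1 - t) ^ (n - i) = (-1) ^ (n - i) * (t - 1) ^ (n - i)).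
  { rewrite <- Rpow_mult_distr. f_equal. ring. }
  assert (E2 : (-1) ^ n = (-1) ^ i * (-1) ^ (n - i)).
  { rewrite <- pow_add. f_equal. lia. }
  assert (E3 : bn n i * INR (Factorial.fact i) * INR (Factorial.fact (n - i)) = INR (Factorial.fact n))
    by (apply bn_fact; auto).
  rewrite E1, E2, <- E3. ring.
Qed.

Lemma loc01 x : 0 < x < 1 -> locally x (fun y => 0 < y < 1).
Proof.
  intros Hx. assert (Hp : 0 < Rmin x (1 - x)) by (apply Rmin_glb_lt; lra).
  exists (mkposreal _ Hp). intros y Hy. apply (proj1 (ball_R _ _ _)) in Hy. cbn [pos] in Hy.
  pose proof (Rmin_l x (1-x)). pose proof (Rmin_r x (1-x)).
  apply Rabs_lt_between in Hy. lra.
Qed.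

Lemma cont_uu be i t : t < 1 -> continuous (uu be i) t.
Proof. intros; apply (cont_of_der _ t (uu be (S i) t)), der_uu; auto. Qed.

Lemma cont_vv al i t : 0 < t -> continuous (vv al i) t.
Proof. intros; apply (cont_of_der _ t (vv al (S i) t)), der_vv; auto. Qed.

Lemma Phi_lim0 al be j : INR j < al -> filterlim (Phi al be j) (at_right 0) (locally 0).
Proof.
  intros Hj. unfold Phi, Lb. apply (lim_sum0 (fun i t => bn j i * uu be i t * vv al (j - i) t)).
  intros i Hi.
  eapply lim_eq. apply lim_mult. apply lim_mult. apply lim_const.
  apply cont_right, cont_uu; lra.
  unfold vv. apply lim_mult. apply lim_const. apply lim_Rpow0.
  assert (INR (j - i) <= INR j) by (apply le_INR; lia). lra.
  fixeq; ring.
Qed.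

Lemma Phi_lim1 al be j : INR j < be -> filterlim (Phi al be j) (at_left 1) (locally 0).
Proof.
  intros Hj. unfold Phi, Lb. apply (lim_sum0 (fun i t => bn j i * uu be i t * vv al (j - i) t)).
  intros i Hi.
  eapply lim_eq. apply lim_mult. apply lim_mult. apply lim_const.
  unfold uu. apply lim_mult. apply lim_const. apply lim_Rpow1.
  assert (INR i <= INR j) by (apply le_INR; lia). lra.
  apply cont_left, cont_vv; lra.
  fixeq; ring.
Qed.

Lemma telesc (a : nat -> R) m : sum_f_R0 (fun i => a i - a (S i)) m = a O - a (S m).
Proof. induction m; simpl. ring. rewrite IHm. ring. Qed.

Lemma ibp al be m (F : nat -> R -> R) :
  INR m < al -> INR m < be ->
  (forall i t, (i <= m)%nat -> 0 < t < 1 -> is_derive (F i) t (F (S i) t)) ->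
  (forall t, 0 < t < 1 -> continuous (F (S m)) t) ->
  (forall i, (i <= m)%nat -> exists c, filterlim (F i) (at_right 0) (locally c)) ->
  (forall i, (i <= m)%nat -> exists c, filterlim (F i) (at_left 1) (locally c)) ->
  is_RInt_gen (fun t => Phi al be (S m) t * F O t - (-1) ^ (S m) * (Phi al be O t * F (S m) t))
    (at_right 0) (at_left 1) 0.
Proof.
  intros Hal Hbe HF HFc HL0 HL1.
  set (g := fun t => Phi al be (S m) t * F O t - (-1) ^ (S m) * (Phi al be O t * F (S m) t)).
  set (H := fun t => sum_f_R0 (fun i => (-1) ^ i * (Phi al be (m - i) t * F i t)) m).
  assert (dH : forall t, 0 < t < 1 -> is_derive H t (g t)).
  { intros t Ht. unfold H. eapply der_eq.
    - apply (der_sum (fun i t => (-1) ^ i * (Phi al be (m - i) t * F i t))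
        (fun i => (-1) ^ i * (Phi al be (S (m - i)) t * F i t + Phi al be (m - i) t * F (S i) t))).
      intros k Hk. apply is_derive_scal. apply der_mult. apply der_Phi; auto. apply HF; auto.
    - fixeq. set (a := fun i => (-1) ^ i * Phi al be (S m - i) t * F i t).
      transitivity (sum_f_R0 (fun i => a i - a (S i)) m).
      + apply sum_eq. intros i Hi. unfold a. replace (S m - i)%nat with (S (m - i)) by lia.
        simpl (S m - S i)%nat. simpl pow. ring.
      + rewrite telesc. unfold a, g. rewrite Nat.sub_diag, Nat.sub_0_r. simpl pow. ring. }
  assert (cg : forall t, 0 < t < 1 -> continuous g t).
  { intros t Ht. unfold g. apply cminus. apply cmult. apply cont_Phi; auto.
    apply (cont_of_der _ t (F 1%nat t)). apply HF; auto; lia.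
    apply (cmult (fun _ => (-1) ^ (S m)) (fun t => Phi al be 0 t * F (S m) t)). apply cconst.
    apply cmult. apply cont_Phi; auto. apply HFc; auto. }
  assert (RR : is_RInt_gen (Derive H) (at_right 0) (at_left 1) (0 - 0)).
  { apply is_RInt_gen_Derive.
    - exists (fun a => 0 < a < 1) (fun b => 1 - 1 < b < 1).
      apply ev_right0; lra. apply ev_left1; lra.
      intros u v Hu Hv x Hx. simpl in Hx.
      assert (0 < x < 1).
      { split. apply Rlt_le_trans with (Rmin u v); [apply Rmin_glb_lt; lra|apply Hx].
        apply Rle_lt_trans with (Rmax u v); [apply Hx|apply Rmax_lub_lt; lra]. }
      exists (g x). apply dH; auto.
    - exists (fun a => 0 < a < 1) (fun b => 1 - 1 < b < 1).
      apply ev_right0; lra. apply ev_left1; lra.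
      intros u v Hu Hv x Hx. simpl in Hx.
      assert (Hx' : 0 < x < 1).
      { split. apply Rlt_le_trans with (Rmin u v); [apply Rmin_glb_lt; lra|apply Hx].
        apply Rle_lt_trans with (Rmax u v); [apply Hx|apply Rmax_lub_lt; lra]. }
      apply (continuous_ext_loc _ g). 
      + eapply filter_imp; [|apply loc01; exact Hx']. intros y Hy. symmetry. apply is_derive_unique, dH; auto.
      + apply cg; auto.
    - unfold H. apply (lim_sum0 (fun i t => (-1) ^ i * (Phi al be (m - i) t * F i t))).
      intros i Hi. destruct (HL0 i Hi) as [c Hc].
      eapply lim_eq. apply lim_mult. apply lim_const. apply lim_mult. apply Phi_lim0.
      assert (INR (m - i) <= INR m) by (apply le_INR; lia). lra. exact Hc. fixeq; ring.
    - unfold H. apply (lim_sum0 (fun i t => (-1) ^ i * (Phi al be (m - i) t * F i t))).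
      intros i Hi. destruct (HL1 i Hi) as [c Hc].
      eapply lim_eq. apply lim_mult. apply lim_const. apply lim_mult. apply Phi_lim1.
      assert (INR (m - i) <= INR m) by (apply le_INR; lia). lra. exact Hc. fixeq; ring. }
  rewrite Rminus_0_r in RR.
  eapply is_RInt_gen_ext; [| exact RR].
  exists (fun a => 0 < a < 1) (fun b => 1 - 1 < b < 1).
  apply ev_right0; lra. apply ev_left1; lra.
  intros u v Hu Hv x Hx. simpl in Hx.
  assert (Hx' : 0 < x < 1).
  { split. apply Rlt_trans with (Rmin u v); [apply Rmin_glb_lt; lra|apply Hx].
    apply Rlt_trans with (Rmax u v); [apply Hx|apply Rmax_lub_lt; lra]. }
  apply is_derive_unique, dH; auto.
Qed.

Lemma in01c u v x : 0 < u < 1 -> 1 - 1 < v < 1 -> Rmin u v <= x <= Rmax u v -> 0 < x < 1.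
Proof.
  intros Hu Hv Hx. split.
  apply Rlt_le_trans with (Rmin u v); [apply Rmin_glb_lt; lra|apply Hx].
  apply Rle_lt_trans with (Rmax u v); [apply Hx|apply Rmax_lub_lt; lra].
Qed.

Lemma in01o u v x : 0 < u < 1 -> 1 - 1 < v < 1 -> Rmin u v < x < Rmax u v -> 0 < x < 1.
Proof. intros Hu Hv Hx. apply (in01c u v x); auto. lra. Qed.

Lemma ev01 : filter_prod (at_right 0) (at_left 1) (fun ab => 0 < fst ab < 1 /\ 1 - 1 < snd ab < 1).
Proof.
  exists (fun a => 0 < a < 1) (fun b => 1 - 1 < b < 1).
  apply ev_right0; lra. apply ev_left1; lra. intros; simpl; auto.
Qed.

Lemma ev01h : filter_prod (at_right 0) (at_left 1) (fun ab => 0 < fst ab < 1/2 /\ 1/2 < snd ab < 1).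
Proof.
  exists (fun a => 0 < a < 1/2) (fun b => 1 - 1/2 < b < 1).
  apply ev_right0; lra. apply ev_left1; lra. intros; simpl; lra.
Qed.

Lemma ftc01 (f g : R -> R) la lb :
  (forall t, 0 < t < 1 -> is_derive f t (g t)) -> (forall t, 0 < t < 1 -> continuous g t) ->
  filterlim f (at_right 0) (locally la) -> filterlim f (at_left 1) (locally lb) ->
  is_RInt_gen g (at_right 0) (at_left 1) (lb - la).
Proof.
  intros dH cg H0 H1.
  assert (RR : is_RInt_gen (Derive f) (at_right 0) (at_left 1) (lb - la)).
  { apply is_RInt_gen_Derive; auto.
    - eapply filter_imp; [|exact ev01]. intros [u v] [Hu Hv] x Hx. simpl in *.
      exists (g x). apply dH. apply (in01c u v); auto.
    - eapply filter_imp; [|exact ev01]. intros [u v] [Hu Hv] x Hx. simpl in *.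
      pose proof (in01c u v x Hu Hv Hx) as Hx'.
      apply (continuous_ext_loc _ g).
      + eapply filter_imp; [|apply loc01; exact Hx']. intros y Hy. symmetry. apply is_derive_unique, dH; auto.
      + apply cg; auto. }
  eapply is_RInt_gen_ext; [| exact RR].
  eapply filter_imp; [|exact ev01]. intros [u v] [Hu Hv] x Hx. simpl in *.
  apply is_derive_unique, dH. apply (in01o u v); auto.
Qed.

Lemma gen_nonneg (g : R -> R) l : is_RInt_gen g (at_right 0) (at_left 1) l ->
  (forall t, 0 < t < 1 -> 0 <= g t) -> 0 <= l.
Proof.
  intros H Hg.
  assert (Rabs l <= l).
  { apply (RInt_gen_norm (V:=R_CompleteNormedModule) (Fa:=at_right 0) (Fb:=at_left 1) g g l l); auto.
    - eapply filter_imp; [|exact ev01h]. intros [u v] [Hu Hv]; simpl in *. lra.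
    - eapply filter_imp; [|exact ev01h]. intros [u v] [Hu Hv] x Hx; simpl in *.
      change (Rabs (g x) <= g x). rewrite Rabs_pos_eq. lra. apply Hg. lra. }
  pose proof (Rabs_pos l). lra.
Qed.

Lemma gen_lim (g : R -> R) l : is_RInt_gen g (at_right 0) (at_left 1) l ->
  (forall u v, 0 < u < 1 -> 0 < v < 1 -> ex_RInt g u v) ->
  filterlim (fun ab => RInt g (fst ab) (snd ab)) (filter_prod (at_right 0) (at_left 1)) (locally l).
Proof.
  intros H Ex P HP. specialize (H P HP). unfold filtermapi in H. unfold filtermap.
  generalize (filter_and _ _ H ev01). apply filter_imp.
  intros [u v] [[y [Hy Py]] [Hu Hv]]. simpl in *.
  rewrite (is_RInt_unique g u v y Hy). exact Py.
Qed.

Definition om (al be : R) (G : R -> R) : R -> R := fun t => Rpower t al * Rpower (1 - t) be * G t.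

Lemma om_cont al be G t : 0 < t < 1 -> continuous G t -> continuous (om al be G) t.
Proof.
  intros Ht HG. unfold om. apply cmult; [apply cmult|]; auto.
  apply cont_Rpow; lra. apply cont_Rpow1m; lra.
Qed.

Lemma om_ex al be G u v : 0 < u < 1 -> 0 < v < 1 -> (forall t, 0 < t < 1 -> continuous G t) ->
  ex_RInt (om al be G) u v.
Proof.
  intros Hu Hv HG. apply exR. intros t Ht. apply om_cont; [|apply HG]; apply (in01c u v t); lra.
Qed.

Lemma om_is al be K G : -1 < al -> -1 < be -> (forall t, 0 < t < 1 -> continuous G t) ->
  (forall t, 0 < t < 1 -> Rabs (G t) <= K) ->
  is_RInt_gen (om al be G) (at_right 0) (at_left 1) (RInt_gen (om al be G) (at_right 0) (at_left 1)).
Proof.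
  intros Ha Hb Hc HK. apply (RInt_gen_correct (V:=R_CompleteNormedModule) (Fa:=at_right 0) (Fb:=at_left 1)). apply (ex_int_w al be K G); auto.
Qed.

Lemma is_gen_ext (f g : R -> R) l : (forall t, 0 < t < 1 -> f t = g t) ->
  is_RInt_gen f (at_right 0) (at_left 1) l -> is_RInt_gen g (at_right 0) (at_left 1) l.
Proof.
  intros E H. eapply is_RInt_gen_ext; [|exact H].
  eapply filter_imp; [|exact ev01]. intros [u v] [Hu Hv] x Hx. simpl in *.
  apply E. apply (in01o u v); auto.
Qed.

Lemma is_gen_uniq (f : R -> R) l1 l2 : is_RInt_gen f (at_right 0) (at_left 1) l1 ->
  is_RInt_gen f (at_right 0) (at_left 1) l2 -> l1 = l2.
Proof.
  intros H1 H2. apply (is_RInt_gen_unique (V:=R_CompleteNormedModule) (Fa:=at_right 0) (Fb:=at_left 1)) in H1. apply (is_RInt_gen_unique (V:=R_CompleteNormedModule) (Fa:=at_right 0) (Fb:=at_left 1)) in H2. congruence.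
Qed.

Section Beta.
Variables al be : R.
Hypothesis Hal : -1 < al.
Hypothesis Hbe : -1 < be.

Let B : R := RInt_gen (om al be (fun _ => 1)) (at_right 0) (at_left 1).
Let B1 : R := RInt_gen (om al be (fun t => t)) (at_right 0) (at_left 1).
Let B2 : R := RInt_gen (om al be (fun t => 1 - t)) (at_right 0) (at_left 1).

Lemma EB : is_RInt_gen (om al be (fun _ => 1)) (at_right 0) (at_left 1) B.
Proof. apply (om_is al be 1); auto. intros; apply cconst. intros; rewrite Rabs_R1; lra. Qed.
Lemma EB1 : is_RInt_gen (om al be (fun t => t)) (at_right 0) (at_left 1) B1.
Proof. apply (om_is al be 1); auto. intros; apply cid. intros; rewrite Rabs_pos_eq; lra. Qed.
Lemma EB2 : is_RInt_gen (om al be (fun t => 1 - t)) (at_right 0) (at_left 1) B2.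
Proof. apply (om_is al be 1); auto. intros; apply cminus; [apply cconst|apply cid].
  intros; rewrite Rabs_pos_eq; lra. Qed.

Lemma B_sum : B = B1 + B2.
Proof.
  pose proof (is_RInt_gen_plus _ _ _ _ EB1 EB2) as H.
  apply (is_gen_uniq (om al be (fun _ => 1))). exact EB.
  eapply is_gen_ext; [|exact H]. intros t Ht. unfold om, plus; simpl. ring.
Qed.

Lemma B_der : (al + 1) * B2 = (be + 1) * B1.
Proof.
  set (f := fun t => Rpower t (al+1) * Rpower (1 - t) (be+1)).
  set (g := fun t => (al + 1) * Rpower t (al + 1 - 1) * Rpower (1 - t) (be + 1)
                     + Rpower t (al + 1) * - ((be + 1) * Rpower (1 - t) (be + 1 - 1))).
  assert (H : is_RInt_gen g (at_right 0) (at_left 1) (0 - 0)).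
  { apply (ftc01 f g).
    - intros t Ht. unfold f, g. apply (der_mult (fun s => Rpower s (al+1)) (fun s => Rpower (1-s) (be+1))). apply der_Rpow; lra. apply der_Rpow1m; lra.
    - intros t Ht. unfold g. apply cplus. apply cmult. apply cmult. apply cconst. apply cont_Rpow; lra.
      apply cont_Rpow1m; lra. apply cmult. apply cont_Rpow; lra.
      apply (cext (fun s => (-1) * ((be + 1) * Rpower (1 - s) (be + 1 - 1)))). intros; ring.
      apply cmult. apply cconst. apply cmult. apply cconst. apply cont_Rpow1m; lra.
    - unfold f. eapply lim_eq. apply lim_mult. apply lim_Rpow0; lra.
      apply cont_right, cont_Rpow1m; lra. fixeq; ring.
    - unfold f. eapply lim_eq. apply lim_mult. apply cont_left, cont_Rpow; lra.
      apply lim_Rpow1; lra. fixeq; ring. }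
  pose proof (is_RInt_gen_minus _ _ _ _ (is_RInt_gen_scal _ (al+1) _ EB2) (is_RInt_gen_scal _ (be+1) _ EB1)) as H2.
  assert (E : 0 - 0 = minus (scal (al + 1) B2) (scal (be + 1) B1)).
  { apply (is_gen_uniq g). exact H. eapply is_gen_ext; [|exact H2].
    intros t Ht. unfold g, om, minus, plus, opp, scal; simpl. unfold mult; simpl.
    replace (al + 1 - 1) with al by ring. replace (be + 1 - 1) with be by ring.
    rewrite !Rpower_plus, !Rpower_1 by lra. ring. }
  unfold minus, plus, opp, scal in E; simpl in E. unfold mult in E; simpl in E. lra.
Qed.

Lemma B1_eq : B1 = B * (al + 1) / (al + be + 2).
Proof.
  pose proof B_sum as H1. pose proof B_der as H2.
  apply Rmult_eq_reg_r with (al + be + 2); [|lra].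
  replace (B * (al + 1) / (al + be + 2) * (al + be + 2)) with (B * (al + 1)) by (field; lra).
  rewrite H1. replace ((B1 + B2) * (al + 1)) with (B1 * (al + 1) + (al + 1) * B2) by ring.
  rewrite H2. ring.
Qed.

Lemma B_pos : 0 < B.
Proof.
  set (c := RInt (om al be (fun _ => 1)) (1/4) (3/4)).
  assert (Hc : 0 < c).
  { apply RInt_gt_0. lra. intros x Hx. unfold om. rewrite Rmult_1_r.
    apply Rmult_lt_0_compat; apply Rpow_pos.
    intros x Hx. apply om_cont. lra. apply cconst. }
  assert (HL := gen_lim _ _ EB).
  apply Rlt_le_trans with c; auto.
  assert (PF : ProperFilter' (filter_prod (at_right 0) (at_left 1))).
  { apply Proper_StrongProper. apply filter_prod_proper; try apply at_right_proper_filter; try apply at_left_proper_filter. }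
  apply (@closed_filterlim_loc (R*R) R_UniformSpace (filter_prod (at_right 0) (at_left 1)) PF
     (fun ab => RInt (om al be (fun _ => 1)) (fst ab) (snd ab)) (fun y => c <= y) B).
  - apply HL. intros u v Hu Hv. apply om_ex; auto. intros; apply cconst.
  - exists (fun a => 0 < a < 1/4) (fun b => 1 - 1/4 < b < 1).
    apply ev_right0; lra. apply ev_left1; lra.
    intros u v Hu Hv. simpl.
    assert (Ex : forall p q, 0 < p < 1 -> 0 < q < 1 -> ex_RInt (om al be (fun _ => 1)) p q).
    { intros p q Hp Hq. apply om_ex; auto. intros; apply cconst. }
    assert (Pos : forall p q, 0 < p < 1 -> 0 < q < 1 -> p <= q -> 0 <= RInt (om al be (fun _ => 1)) p q).
    { intros p q Hp Hq Hpq. apply RInt_ge_0; auto. intros x Hx. unfold om. rewrite Rmult_1_r.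
      left; apply Rmult_lt_0_compat; apply Rpow_pos. }
    rewrite <- (RInt_Chasles _ u (1/4) v) by (apply Ex; lra).
    rewrite <- (RInt_Chasles _ (1/4) (3/4) v) by (apply Ex; lra).
    fold c. unfold plus; simpl.
    pose proof (Pos u (1/4) ltac:(lra) ltac:(lra) ltac:(lra)).
    pose proof (Pos (3/4) v ltac:(lra) ltac:(lra) ltac:(lra)). lra.
  - apply closed_ge.
Qed.

End Beta.

Lemma conv a b t0 h s : in_open_interval a b t0 -> in_open_interval a b (t0 + h) ->
  0 <= s <= 1 -> in_open_interval a b (t0 + h * s).
Proof.
  unfold in_open_interval. intros [H1 H2] [H3 H4] Hs.
  assert (Hlo : Rmin t0 (t0 + h) <= t0 + h * s).
  { destruct (Rle_dec 0 h). rewrite Rmin_left by lra. nra. rewrite Rmin_right by lra. nra. }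
  assert (Hhi : t0 + h * s <= Rmax t0 (t0 + h)).
  { destruct (Rle_dec 0 h). rewrite Rmax_right by lra. nra. rewrite Rmax_left by lra. nra. }
  destruct a as [a| |]; destruct b as [b| |]; simpl in *; split; try tauto.
  all: try (apply Rlt_le_trans with (Rmin t0 (t0 + h)); auto; apply Rmin_glb_lt; auto).
  all: try (apply Rle_lt_trans with (Rmax t0 (t0 + h)); auto; apply Rmax_lub_lt; auto).
Qed.

Lemma cont_bounded (f : R -> R) l r : l <= r -> (forall t, l <= t <= r -> continuous f t) ->
  exists K, forall t, l <= t <= r -> Rabs (f t) <= K.
Proof.
  intros Hlr Hc.
  destruct (continuity_ab_maj f l r Hlr) as [M [HM _]].
  { intros c Hc'. apply continuity_pt_filterlim. apply Hc; auto. }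
  destruct (continuity_ab_maj (fun t => - f t) l r Hlr) as [m [Hm _]].
  { intros c Hc'. apply continuity_pt_filterlim.
    apply (continuous_opp f c). apply Hc; auto. }
  exists (Rmax (Rabs (f M)) (Rabs (f m))). intros t Ht.
  specialize (HM t Ht). specialize (Hm t Ht).
  apply Rabs_le. split.
  - pose proof (Rle_abs (- f m)). rewrite Rabs_Ropp in H. pose proof (Rmax_r (Rabs (f M)) (Rabs (f m))). lra.
  - pose proof (Rle_abs (f M)). pose proof (Rmax_l (Rabs (f M)) (Rabs (f m))). lra.
Qed.

Lemma lin3 al be (G1 G2 G3 : R -> R) l1 l2 l3 k2 k3 :
  is_RInt_gen (om al be G1) (at_right 0) (at_left 1) l1 ->
  is_RInt_gen (om al be G2) (at_right 0) (at_left 1) l2 ->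
  is_RInt_gen (om al be G3) (at_right 0) (at_left 1) l3 ->
  is_RInt_gen (om al be (fun t => G1 t - k2 * G2 t - k3 * G3 t)) (at_right 0) (at_left 1)
    (l1 - k2 * l2 - k3 * l3).
Proof.
  intros H1 H2 H3.
  pose proof (is_RInt_gen_minus _ _ _ _ (is_RInt_gen_minus _ _ _ _ H1 (is_RInt_gen_scal _ k2 _ H2))
     (is_RInt_gen_scal _ k3 _ H3)) as H.
  replace (l1 - k2 * l2 - k3 * l3) with (minus (minus l1 (scal k2 l2)) (scal k3 l3)).
  2:{ unfold minus, plus, opp, scal; simpl; unfold mult; simpl. ring. }
  eapply is_gen_ext; [|exact H]. intros t Ht. unfold om, minus, plus, opp, scal; simpl; unfold mult; simpl. ring.
Qed.

Lemma gen_nonpos (g : R -> R) l : is_RInt_gen g (at_right 0) (at_left 1) l ->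
  (forall t, 0 < t < 1 -> g t <= 0) -> l <= 0.
Proof.
  intros H Hg. pose proof (is_RInt_gen_opp _ _ H) as H'.
  apply gen_nonneg in H'. unfold opp in H'; simpl in H'. lra.
  intros t Ht. unfold opp; simpl. specialize (Hg t Ht). lra.
Qed.

Section Main.
Variables (a b : Rbar) (n : nat) (x : R -> R) (kappa mu t0 h : R).
Hypothesis HC : Cn_on (S n) a b x.
Hypothesis Hk : -1 < kappa.
Hypothesis Hm : -1 < mu.
Hypothesis Ht0 : in_open_interval a b t0.
Hypothesis Ht1 : in_open_interval a b (t0 + h).
Hypothesis Hh : h <> 0.

Definition Fx (i : nat) (t : R) : R := h ^ i * Derive_n x i (t0 + h * t).

Lemma dD i s : (i <= n)%nat -> 0 <= s <= 1 ->
  is_derive (fun t => Derive_n x i (t0 + h * t)) s (h * Derive_n x (S i) (t0 + h * s)).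
Proof.
  intros Hi Hs. destruct HC as [HC1 _].
  assert (Hin := conv a b t0 h s Ht0 Ht1 Hs).
  assert (E : ex_derive (Derive_n x i) (t0 + h * s)).
  { apply (HC1 (S i)); [lia|exact Hin]. }
  apply (is_derive_comp (Derive_n x i) (fun t => t0 + h * t) s).
  - simpl. apply Derive_correct. exact E.
  - auto_derive; auto. ring.
Qed.

Lemma dFx i s : (i <= n)%nat -> 0 <= s <= 1 -> is_derive (Fx i) s (Fx (S i) s).
Proof.
  intros Hi Hs. unfold Fx. eapply der_eq. apply is_derive_scal. apply dD; auto.
  simpl pow. fixeq; ring.
Qed.

Lemma cFx i s : (i <= n)%nat -> 0 <= s <= 1 -> continuous (Fx i) s.
Proof. intros Hi Hs. apply (cont_of_der _ s (Fx (S i) s)), dFx; auto. Qed.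

Lemma cG s : 0 <= s <= 1 -> continuous (fun t => Derive_n x n (t0 + h * t)) s.
Proof. intros Hs. apply (cont_of_der _ s (h * Derive_n x (S n) (t0 + h * s))), dD; auto. Qed.

Lemma cFxn s : 0 <= s <= 1 -> continuous (Fx n) s.
Proof. intros; apply cFx; auto. Qed.

Lemma G_bound : exists K, forall t, 0 < t < 1 -> Rabs (Derive_n x n (t0 + h * t)) <= K.
Proof.
  destruct (cont_bounded (fun t => Derive_n x n (t0 + h * t)) 0 1) as [K HK]; [lra| |].
  intros t Ht; apply cG; auto. exists K; intros; apply HK; lra.
Qed.

Lemma HJ : is_RInt_gen (om (INR n + kappa) (INR n + mu) (fun t => Derive_n x n (t0 + h * t)))
  (at_right 0) (at_left 1)
  (RInt_gen (om (INR n + kappa) (INR n + mu) (fun t => Derive_n x n (t0 + h * t))) (at_right 0) (at_left 1)).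
Proof.
  destruct G_bound as [K HK]. apply (om_is _ _ K); auto.
  pose proof (pos_INR n); lra. pose proof (pos_INR n); lra.
  intros t Ht; apply cG; lra.
Qed.

Lemma key_n : is_RInt_gen (fun t => Phi (INR n + kappa) (INR n + mu) n t * Fx 0 t) (at_right 0) (at_left 1)
  ((-1) ^ n * (h ^ n * RInt_gen (om (INR n + kappa) (INR n + mu) (fun t => Derive_n x n (t0 + h * t))) (at_right 0) (at_left 1))).
Proof.
  set (J := RInt_gen (om (INR n + kappa) (INR n + mu) (fun t => Derive_n x n (t0 + h * t))) (at_right 0) (at_left 1)).
  assert (HJn : is_RInt_gen (om (INR n + kappa) (INR n + mu) (Fx n)) (at_right 0) (at_left 1) (h ^ n * J)).
  { pose proof (is_RInt_gen_scal _ (h ^ n) _ HJ) as H. eapply is_gen_ext; [|exact H].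
    intros t Ht. unfold om, Fx, scal; simpl; unfold mult; simpl. ring. }
  assert (Hdf : forall i t, (i <= n)%nat -> 0 <= t <= 1 -> is_derive (Fx i) t (Fx (S i) t))
    by (intros; apply dFx; auto).
  assert (Hcf : forall i t, (i <= n)%nat -> 0 <= t <= 1 -> continuous (Fx i) t)
    by (intros; apply cFx; auto).
  clearbody J.
  destruct n as [|m].
  - eapply is_gen_ext; [|rewrite pow_O, Rmult_1_l; exact HJn].
    intros t Ht. rewrite Phi_0. unfold om. ring.
  - assert (Hib := ibp (INR (S m) + kappa) (INR (S m) + mu) m Fx).
    rewrite S_INR in Hib.
    assert (Hib' : is_RInt_gen (fun t => Phi (INR (S m) + kappa) (INR (S m) + mu) (S m) t * Fx 0 t
           - (-1) ^ S m * (Phi (INR (S m) + kappa) (INR (S m) + mu) 0 t * Fx (S m) t)) (at_right 0) (at_left 1) 0).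
    { rewrite S_INR. apply Hib; try lra.
      - intros i t Hi Ht. apply Hdf; lia || lra.
      - intros t Ht. apply Hcf; lia || lra.
      - intros i Hi. exists (Fx i 0). apply cont_right, Hcf; lia || lra.
      - intros i Hi. exists (Fx i 1). apply cont_left, Hcf; lia || lra. }
    pose proof (is_RInt_gen_plus _ _ _ _ Hib' (is_RInt_gen_scal _ ((-1) ^ S m) _ HJn)) as H.
    replace ((-1) ^ S m * (h ^ S m * J)) with (plus 0 (scal ((-1) ^ S m) (h ^ S m * J))).
    2:{ unfold plus, scal; simpl; unfold mult; simpl. ring. }
    eapply is_gen_ext; [|exact H].
    intros t Ht. cbv beta. rewrite Phi_0. unfold om, plus, scal; simpl; unfold mult; simpl. ring.
Qed.

Lemma est_eq : jacobi_estimator n mu kappa h t0 x =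
  RInt_gen (om (INR n + kappa) (INR n + mu) (fun t => Derive_n x n (t0 + h * t))) (at_right 0) (at_left 1)
  / RInt_gen (om (INR n + kappa) (INR n + mu) (fun _ => 1)) (at_right 0) (at_left 1).
Proof.
  assert (Hal : -1 < INR n + kappa) by (pose proof (pos_INR n); lra).
  assert (Hbe : -1 < INR n + mu) by (pose proof (pos_INR n); lra).
  set (J := RInt_gen (om (INR n + kappa) (INR n + mu) (fun t => Derive_n x n (t0 + h * t))) (at_right 0) (at_left 1)).
  set (B := RInt_gen (om (INR n + kappa) (INR n + mu) (fun _ => 1)) (at_right 0) (at_left 1)).
  assert (HB : 0 < B) by (apply B_pos; auto).
  unfold jacobi_estimator.
  assert (EBt : Beta (kappa + INR n + 1) (mu + INR n + 1) = B).
  { unfold Beta. replace (kappa + INR n + 1 - 1) with (INR n + kappa) by ring.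
    replace (mu + INR n + 1 - 1) with (INR n + mu) by ring.
    apply (is_RInt_gen_unique (V:=R_CompleteNormedModule) (Fa:=at_right 0) (Fb:=at_left 1)).
    eapply is_gen_ext; [|apply EB; auto]. intros; unfold om; ring. }
  assert (Hpn : (-1) ^ n <> 0) by (apply pow_nonzero; lra).
  assert (Hf : INR (Factorial.fact n) <> 0) by apply INR_fact_neq_0.
  assert (Hhn : h ^ n <> 0) by (apply pow_nonzero; auto).
  assert (EI : RInt_gen (fun tau => jac_weight mu kappa tau * jacobiP n mu kappa tau * x (t0 + h * tau))
                 (at_right 0) (at_left 1) = h ^ n * J / INR (Factorial.fact n)).
  { apply (is_RInt_gen_unique (V:=R_CompleteNormedModule) (Fa:=at_right 0) (Fb:=at_left 1)).
    pose proof (is_RInt_gen_scal _ (/ ((-1) ^ n * INR (Factorial.fact n))) _ key_n) as H.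
    fold J in H.
    replace (h ^ n * J / INR (Factorial.fact n)) with
      (scal (/ ((-1) ^ n * INR (Factorial.fact n))) ((-1) ^ n * (h ^ n * J))).
    2:{ unfold scal; simpl; unfold mult; simpl. field. auto. }
    eapply is_gen_ext; [|exact H]. intros t Ht. unfold scal; simpl; unfold mult; simpl.
    rewrite Phi_n by auto. unfold Fx. simpl Derive_n. simpl pow. field. auto. }
  rewrite EBt, EI. field. split; auto; lra.
Qed.

Lemma main_bound lo hi :
  (forall t, 0 < t < 1 -> h * t * lo <= Derive_n x n (t0 + h * t) - Derive_n x n t0 <= h * t * hi) ->
  Ccoef n mu kappa h * lo <= bias_error n mu kappa h t0 x <= Ccoef n mu kappa h * hi.
Proof.
  intros Hb.
  assert (Hal : -1 < INR n + kappa) by (pose proof (pos_INR n); lra).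
  assert (Hbe : -1 < INR n + mu) by (pose proof (pos_INR n); lra).
  unfold bias_error. rewrite est_eq.
  set (J := RInt_gen (om (INR n + kappa) (INR n + mu) (fun t => Derive_n x n (t0 + h * t))) (at_right 0) (at_left 1)).
  set (B := RInt_gen (om (INR n + kappa) (INR n + mu) (fun _ => 1)) (at_right 0) (at_left 1)).
  set (B1 := RInt_gen (om (INR n + kappa) (INR n + mu) (fun t => t)) (at_right 0) (at_left 1)).
  set (c := Derive_n x n t0).
  assert (HB : 0 < B) by (apply B_pos; auto).
  assert (E1 : B1 = B * (INR n + kappa + 1) / (INR n + kappa + (INR n + mu) + 2)) by (apply B1_eq; auto).
  assert (L : 0 <= J - c * B - (lo * h) * B1).
  { apply (gen_nonneg (om (INR n + kappa) (INR n + mu)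
       (fun t => Derive_n x n (t0 + h * t) - c * 1 - (lo * h) * t))).
    apply lin3. apply HJ. apply EB; auto. apply EB1; auto.
    intros t Ht. unfold om. apply Rmult_le_pos. left; apply Rmult_lt_0_compat; apply Rpow_pos.
    specialize (Hb t Ht). fold c in Hb. lra. }
  assert (U : J - (hi * h) * B1 - c * B <= 0).
  { apply (gen_nonpos (om (INR n + kappa) (INR n + mu)
       (fun t => Derive_n x n (t0 + h * t) - (hi * h) * t - c * 1))).
    apply lin3. apply HJ. apply EB1; auto. apply EB; auto.
    intros t Ht. unfold om. 
    assert (0 < Rpower t (INR n + kappa) * Rpower (1 - t) (INR n + mu))
      by (apply Rmult_lt_0_compat; apply Rpow_pos).
    specialize (Hb t Ht). fold c in Hb.
    assert (Derive_n x n (t0 + h * t) - hi * h * t - c * 1 <= 0) by lra. nra. }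
  assert (Hd : INR n + kappa + (INR n + mu) + 2 > 0) by (pose proof (pos_INR n); lra).
  assert (EC : forall q, Ccoef n mu kappa h * q = q * h * B1 / B).
  { intros q. rewrite E1. unfold Ccoef. field. split; lra. }
  rewrite !EC.
  split.
  - apply Rmult_le_reg_r with B; auto. replace (lo * h * B1 / B * B) with (lo * h * B1) by (field; lra).
    replace ((J / B - c) * B) with (J - c * B) by (field; lra). lra.
  - apply Rmult_le_reg_r with B; auto. replace (hi * h * B1 / B * B) with (hi * h * B1) by (field; lra).
    replace ((J / B - c) * B) with (J - c * B) by (field; lra). lra.
Qed.

Lemma conv' c : Rmin t0 (t0 + h) <= c <= Rmax t0 (t0 + h) -> in_open_interval a b c.
Proof.
  intros Hc. replace c with (t0 + h * ((c - t0) / h)) by (field; auto).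
  apply conv; auto.
  destruct (Rle_dec 0 h) as [hp|hn].
  - assert (0 < h) by lra. rewrite Rmin_left, Rmax_right in Hc by lra.
    split. apply Rdiv_le_0_compat; lra. apply Rmult_le_reg_r with h; auto.
    replace ((c - t0) / h * h) with (c - t0) by (field; lra). lra.
  - rewrite Rmin_right, Rmax_left in Hc by lra.
    replace ((c - t0) / h) with ((t0 - c) / (- h)) by (field; lra).
    split. apply Rdiv_le_0_compat; lra. apply Rmult_le_reg_r with (-h); [lra|].
    replace ((t0 - c) / - h * - h) with (t0 - c) by (field; lra). lra.
Qed.

Lemma dpl c : Rmin t0 (t0 + h) <= c <= Rmax t0 (t0 + h) ->
  derivable_pt_lim (Derive_n x n) c (Derive_n x (S n) c).
Proof.
  intros Hc. apply is_derive_Reals. destruct HC as [HC1 _].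
  apply Derive_correct. apply (HC1 (S n)); [lia|]. apply conv'; auto.
Qed.

Lemma mvt_step t : 0 < t < 1 -> exists xi, Rmin t0 (t0 + h) < xi < Rmax t0 (t0 + h) /\
  Derive_n x n (t0 + h * t) - Derive_n x n t0 = h * t * Derive_n x (S n) xi.
Proof.
  intros Ht. destruct (Rle_dec 0 h) as [hp|hn].
  - assert (hp' : 0 < h) by lra.
    destruct (MVT_cor2 (Derive_n x n) (Derive_n x (S n)) t0 (t0 + h * t)) as [xi [E Hxi]].
    nra. intros c Hc. apply dpl. rewrite Rmin_left, Rmax_right by lra. nra.
    exists xi. rewrite Rmin_left, Rmax_right by lra. split. nra. rewrite E. ring.
  - destruct (MVT_cor2 (Derive_n x n) (Derive_n x (S n)) (t0 + h * t) t0) as [xi [E Hxi]].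
    nra. intros c Hc. apply dpl. rewrite Rmin_right, Rmax_left by lra. nra.
    exists xi. rewrite Rmin_right, Rmax_left by lra. split. nra. 
    replace (Derive_n x n (t0 + h * t) - Derive_n x n t0) with (- (Derive_n x n t0 - Derive_n x n (t0 + h * t))) by ring.
    rewrite E. ring.
Qed.

Lemma f1_bound : exists K, forall th, Rmin t0 (t0 + h) <= th <= Rmax t0 (t0 + h) ->
  Rabs (Derive_n x (S n) th) <= K.
Proof.
  apply cont_bounded. apply Rle_trans with t0; [apply Rmin_l|apply Rmax_l].
  intros t Ht. destruct HC as [_ HC2]. apply HC2. apply conv'; auto.
Qed.

End Main.

Lemma inf_fin (f : R -> R) l r K : l < r -> (forall th, l < th < r -> Rabs (f th) <= K) ->
  exists m, inf_on f l r = Finite m /\ forall th, l < th < r -> m <= f th.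
Proof.
  intros Hlr HK. unfold inf_on.
  destruct (Glb_Rbar_correct (fun y => exists th, l < th < r /\ y = f th)) as [Hlb Hglb].
  assert (H1 : Rbar_le (Finite (- K)) (Glb_Rbar (fun y => exists th, l < th < r /\ y = f th))).
  { apply Hglb. intros y [th [Hth ->]]. simpl. specialize (HK th Hth). apply Rabs_le_between in HK. lra. }
  assert (H2 : Rbar_le (Glb_Rbar (fun y => exists th, l < th < r /\ y = f th)) (Finite (f ((l + r) / 2)))).
  { apply Hlb. exists ((l + r) / 2). split; [lra|auto]. }
  destruct (Glb_Rbar (fun y => exists th, l < th < r /\ y = f th)) as [m| |]; simpl in H1, H2; try tauto.
  exists m. split; auto. intros th Hth. specialize (Hlb (f th) (ex_intro _ th (conj Hth eq_refl))). exact Hlb.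
Qed.

Lemma sup_fin (f : R -> R) l r K : l < r -> (forall th, l < th < r -> Rabs (f th) <= K) ->
  exists m, sup_on f l r = Finite m /\ forall th, l < th < r -> f th <= m.
Proof.
  intros Hlr HK. unfold sup_on.
  destruct (Lub_Rbar_correct (fun y => exists th, l < th < r /\ y = f th)) as [Hub Hlub].
  assert (H1 : Rbar_le (Lub_Rbar (fun y => exists th, l < th < r /\ y = f th)) (Finite K)).
  { apply Hlub. intros y [th [Hth ->]]. simpl. specialize (HK th Hth). apply Rabs_le_between in HK. lra. }
  assert (H2 : Rbar_le (Finite (f ((l + r) / 2))) (Lub_Rbar (fun y => exists th, l < th < r /\ y = f th))).
  { apply Hub. exists ((l + r) / 2). split; [lra|auto]. }
  destruct (Lub_Rbar (fun y => exists th, l < th < r /\ y = f th)) as [m| |]; simpl in H1, H2; try tauto.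
  exists m. split; auto. intros th Hth. specialize (Hub (f th) (ex_intro _ th (conj Hth eq_refl))). exact Hub.
Qed.

Theorem proposition2 (a b : Rbar) (n : nat) (x : R -> R) (kappa mu t0 T : R) :
  Rbar_lt a b ->
  Cn_on (S n) a b x ->
  -1 < kappa -> -1 < mu ->
  in_open_interval a b t0 -> 0 < T ->
  (in_open_interval a b (t0 + T) ->
     Rbar_le (Rbar_mult (Ccoef n mu kappa T) (inf_on (Derive_n x (S n)) t0 (t0 + T)))
             (bias_error n mu kappa T t0 x)
     /\ Rbar_le (bias_error n mu kappa T t0 x)
             (Rbar_mult (Ccoef n mu kappa T) (sup_on (Derive_n x (S n)) t0 (t0 + T))))
  /\
  (in_open_interval a b (t0 - T) ->
     Rbar_le (Rbar_mult (Ccoef n mu kappa (- T)) (sup_on (Derive_n x (S n)) (t0 - T) t0))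
             (bias_error n mu kappa (- T) t0 x)
     /\ Rbar_le (bias_error n mu kappa (- T) t0 x)
             (Rbar_mult (Ccoef n mu kappa (- T)) (inf_on (Derive_n x (S n)) (t0 - T) t0))).
Proof.
  intros Hab HC Hk Hm Ht0 HT. split.
  - intros Ht1.
    assert (Hh : T <> 0) by lra.
    destruct (f1_bound a b n x t0 T HC Ht0 Ht1 Hh) as [K HK].
    rewrite Rmin_left, Rmax_right in HK by lra.
    destruct (inf_fin (Derive_n x (S n)) t0 (t0 + T) K) as [m [Em Hm']]; [lra| intros; apply HK; lra |].
    destruct (sup_fin (Derive_n x (S n)) t0 (t0 + T) K) as [M [EM HM']]; [lra| intros; apply HK; lra |].
    rewrite Em, EM.
    destruct (main_bound a b n x kappa mu t0 T HC Hk Hm Ht0 Ht1 Hh m M) as [L U].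
    + intros t Ht. destruct (mvt_step a b n x t0 T HC Ht0 Ht1 Hh t Ht) as [xi [Hxi E]].
      rewrite Rmin_left, Rmax_right in Hxi by lra. rewrite E.
      specialize (Hm' xi Hxi); specialize (HM' xi Hxi).
      assert (0 <= T * t) by nra.
      split; apply Rmult_le_compat_l; auto.
    + split; [exact L| exact U].
  - intros Ht1.
    assert (Hh : - T <> 0) by lra.
    assert (Ht1' : in_open_interval a b (t0 + - T)) by (replace (t0 + - T) with (t0 - T) by ring; exact Ht1).
    destruct (f1_bound a b n x t0 (- T) HC Ht0 Ht1' Hh) as [K HK].
    rewrite Rmin_right, Rmax_left in HK by lra.
    replace (t0 + - T) with (t0 - T) in HK by ring.
    destruct (inf_fin (Derive_n x (S n)) (t0 - T) t0 K) as [m [Em Hm']]; [lra| intros; apply HK; lra |].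
    destruct (sup_fin (Derive_n x (S n)) (t0 - T) t0 K) as [M [EM HM']]; [lra| intros; apply HK; lra |].
    rewrite Em, EM.
    destruct (main_bound a b n x kappa mu t0 (- T) HC Hk Hm Ht0 Ht1' Hh M m) as [L U].
    + intros t Ht. destruct (mvt_step a b n x t0 (- T) HC Ht0 Ht1' Hh t Ht) as [xi [Hxi E]].
      rewrite Rmin_right, Rmax_left in Hxi by lra.
      replace (t0 + - T) with (t0 - T) in Hxi by ring. rewrite E.
      specialize (Hm' xi Hxi); specialize (HM' xi Hxi).
      assert (- T * t <= 0) by nra.
      split; apply Rmult_le_compat_neg_l; auto.
    + split; [exact L| exact U].
Qed.
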